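(* Let $p,q$ be distinct positive integers and $n\ge1$. For every nonempty finite sequence $s$ of elements of $\{p,q\}$, the map $\{p,q\}^n\to\{p,q\}^n$, $x\mapsto A^{p,q}_n(x,s)$, is a bijection (i.e. $A^{p,q}_n$ is a permutation automaton).
   Context: Let $p,q$ be distinct positive integers. Define $\mathrm{Opp}(p)=q$, $\mathrm{Opp}(q)=p$. For $x\in\{p,q\}$ and a finite sequence $s=(s_1,\dots,s_m)$ of positive integers, $RLD^{p,q}(x,s)$ is the sequence over $\{p,q\}$ consisting of $s_1$ copies of $x$, then $s_2$ copies of $\mathrm{Opp}(x)$, then $s_3$ copies of $x$, and so on alternately. For $n\ge1$ and $x=(x_1,\dots,x_n)\in\{p,q\}^n$: $RLD^{p,q}_1(x_1,s)=RLD^{p,q}(x_1,s)$ and $RLD^{p,q}_n(x_{1:n},s)=RLD^{p,q}(x_n, RLD^{p,q}_{n-1}(x_{1:n-1},s))$. For a nonempty sequence $t$ over $\{p,q\}$, $\mathrm{OppEnd}(t)=\mathrm{Opp}(\text{last entry of } t)$. The automaton $A^{p,q}_n$ has state set $\{p,q\}^n$; for a state $x$ and a nonempty finite sequence $s$ over $\{p,q\}$, $A^{p,q}_n(x,s)$ is the state whose $i$-th coordinate is $\mathrm{OppEnd}(RLD^{p,q}_i(x_{1:i},s))$, $i=1,\dots,n$. *)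

(* Defs.v *)
From mathcomp Require Import all_boot.
Set Implicit Arguments. Unset Strict Implicit. Unset Printing Implicit Defensive.

Definition Opp (p q x : nat) : nat := if x == p then q else p.

Fixpoint RLD (p q x : nat) (s : seq nat) : seq nat :=
  match s with
  | [::] => [::]
  | s1 :: t => nseq s1 x ++ RLD p q (Opp p q x) t
  end.

Definition RLDn (p q : nat) (xs : seq nat) (s : seq nat) : seq nat :=
  foldl (fun acc x => RLD p q x acc) s xs.

Definition OppEnd (p q : nat) (t : seq nat) : nat := Opp p q (last 0 t).

(* A^{p,q}_n(x, s): i-th coordinate is OppEnd(RLD_i(x_{1:i}, s)), i = 1..n. *)
Definition Aut (p q n : nat) (x s : seq nat) : seq nat :=
  mkseq (fun i => OppEnd p q (RLDn p q (take i.+1 x) s)) n.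

Definition inPQ (p q : nat) (y : nat) : bool := (y == p) || (y == q).
Definition is_state (p q n : nat) (x : seq nat) : bool :=
  (size x == n) && all (inPQ p q) x.

(* Main.v *)
Require Import Defs.
From mathcomp Require Import all_boot.

Section H.
Variables (p q : nat).
Hypotheses (hp : 0 < p) (hq : 0 < q) (hpq : p != q).

Lemma OppPQ a : inPQ p q (Opp p q a).
Proof. by rewrite /Opp /inPQ; case: (a == p); rewrite !eqxx ?orbT. Qed.

Lemma OppK a : inPQ p q a -> Opp p q (Opp p q a) = a.
Proof.
have hqp : (q == p) = false by rewrite eq_sym (negbTE hpq).
rewrite /Opp /inPQ; case/orP=> /eqP->; rewrite ?eqxx ?hqp ?eqxx //.
Qed.

Arguments OppK {a}.

Lemma PQpos a : inPQ p q a -> 0 < a.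
Proof. by case/orP=> /eqP->. Qed.
Arguments PQpos {a}.

Lemma RLD_PQ a t : inPQ p q a -> all (inPQ p q) t -> all (inPQ p q) (RLD p q a t).
Proof.
elim: t a => [|s1 t IH] a //= Ha /andP[_ Ht].
rewrite all_cat all_nseq Ha orbT /=; exact: IH (OppPQ _) Ht.
Qed.

Lemma RLD_nil a t : inPQ p q a -> t != [::] -> all (inPQ p q) t -> RLD p q a t != [::].
Proof.
case: t => [|s1 t] //= _ _ /andP[H1 _].
by have := PQpos H1; case: s1 {H1}.
Qed.

Lemma last_RLD d a t : inPQ p q a -> t != [::] -> all (inPQ p q) t ->
  last d (RLD p q a t) = if odd (size t) then a else Opp p q a.
Proof.
elim: t a d => [|s1 t IH] a d //= Ha _ /andP[H1 Ht].
rewrite last_cat.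
case: t IH Ht => [|s2 t] IH Ht /=.
  by have := PQpos H1; case: s1 {H1} => //= s1 _; elim: s1.
rewrite (IH _ _ (OppPQ _)) //=.
by case: (odd (size t)) => //=; rewrite OppK.
Qed.

Lemma AutS n a x s :
  Aut p q n.+1 (a :: x) s = OppEnd p q (RLD p q a s) :: Aut p q n x (RLD p q a s).
Proof.
rewrite /Aut /mkseq /= -[in iota 1 n](addn0 1) iotaDl -map_comp.
by case: x.
Qed.

Lemma OppEnd_RLD a t : inPQ p q a -> t != [::] -> all (inPQ p q) t ->
  OppEnd p q (RLD p q a t) = if odd (size t) then Opp p q a else a.
Proof.
move=> Ha Ht Hall; rewrite /OppEnd last_RLD //.
by case: ifP => //; rewrite OppK.
Qed.

Lemma main n : forall s, s != [::] -> all (inPQ p q) s ->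
  [/\ (forall x, is_state p q n x -> is_state p q n (Aut p q n x s)),
      {in is_state p q n &, injective (fun x => Aut p q n x s)} &
      (forall y, is_state p q n y ->
         exists2 x, is_state p q n x & Aut p q n x s = y)].
Proof.
elim: n => [|n IH] s Hs Hall.
  split.
  - by case=> //.
  - by case=> [|? ?] [|? ?].
  - by case=> // _; exists [::].
have HR a : inPQ p q a -> RLD p q a s != [::] /\ all (inPQ p q) (RLD p q a s).
  by move=> Ha; split; [apply: RLD_nil | apply: RLD_PQ].
split.
- case=> [|a x] // Hst; move: Hst; rewrite AutS /is_state /= eqSS => /andP[Hsz /andP[Ha Hx]].
  have [H1 H2] := HR a Ha.
  have [IH1 _ _] := IH _ H1 H2.
  rewrite ?eqSS /OppEnd OppPQ /=.
  have := IH1 x; rewrite /is_state Hsz Hx => /(_ isT) /andP[-> ->].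
  done.
- case=> [|a x] [|b y] //; rewrite !unfold_in /is_state /= !eqSS.
  move=> /andP[Hsx /andP[Ha Hx]] /andP[Hsy /andP[Hb Hy]].
  rewrite !AutS => -[E1 E2].
  have Eab : a = b.
    move: E1; rewrite !OppEnd_RLD //.
    case: ifP => // _ E; by rewrite -(OppK Ha) E OppK.
  subst b.
  have [H1 H2] := HR a Ha.
  have [_ IH2 _] := IH _ H1 H2.
  by rewrite (IH2 x y) // unfold_in /is_state ?Hsx ?Hsy ?Hx ?Hy.
- case=> [|c y] //; rewrite /is_state /= eqSS => /andP[Hsy /andP[Hc Hy]].
  pose a := if odd (size s) then Opp p q c else c.
  have Ha : inPQ p q a by rewrite /a; case: ifP => // _; apply: OppPQ.
  have [H1 H2] := HR a Ha.
  have [_ _ IH3] := IH _ H1 H2.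
  have Hy' : is_state p q n y by rewrite /is_state Hsy Hy.
  have [x Hx Ex] := IH3 y Hy'.
  exists (a :: x).
    by move: Hx; rewrite /is_state /= eqSS Ha => /andP[-> ->].
  rewrite AutS Ex OppEnd_RLD //.
  by rewrite /a; case: (odd (size s)) => //; rewrite OppK.
Qed.
End H.

Theorem lemma1 (p q n : nat) (s : seq nat) :
  0 < p -> 0 < q -> p != q -> 1 <= n ->
  s != [::] -> all (inPQ p q) s ->
  [/\ (forall x, is_state p q n x -> is_state p q n (Aut p q n x s)),
      {in is_state p q n &, injective (fun x => Aut p q n x s)} &
      (forall y, is_state p q n y ->
         exists2 x, is_state p q n x & Aut p q n x s = y)].
Proof.
move=> hp hq hpq _ Hs Hall; exact: main.
Qed.
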